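(* For every positive integer $k$ there is a constant $C_k>0$ such that the following holds. Let $r\in\mathbb{C}$, let $N$ be a positive integer, let $A=\{r, r+1,\ldots, r+N-1\}$, and let $B\subset\mathbb{C}$ be a finite set with $A\subseteq B.B=\{bb':b,b'\in B\}$. Let $G$ be a containment graph of $A$ in $B.B$. If $G$ contains a cycle of length $2k$, then $r$ is an algebraic number of degree at most $k$ and height at most $C_kN^k$.
   Context: Containment graph: given $A\subseteq B.B$, the containment graph $G(A,B.B)$ is the bipartite graph whose two colour classes are two disjoint copies of $B$, obtained by choosing for each $a\in A$ one fixed representation $a=b_1b_2$ with $b_1,b_2\in B$ and placing an edge between $b_1$ in the first copy and $b_2$ in the second copy (so it has $2|B|$ vertices and $|A|$ edges). The height of an integer polynomial is the largest absolute value of its coefficients. The height of an algebraic number $\alpha$ is the height of its primitive polynomial, i.e. the integer polynomial of minimal degree, and with leading coefficient minimal in absolute value, having $\alpha$ as a root. *)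

(* Defs.v *)
From HB Require Import structures.
From mathcomp Require Import all_boot all_order all_algebra.
From mathcomp Require Import complex.
From mathcomp Require Import Rstruct.
From Stdlib Require Rdefinitions.
Set Implicit Arguments. Unset Strict Implicit. Unset Printing Implicit Defensive.
Import Order.TTheory GRing.Theory Num.Theory.
Local Open Scope ring_scope.

Definition CC : Type := Rdefinitions.R[i].

Definition poly_height (p : {poly int}) : nat :=
  (\max_(i < size p) absz (nth 0%R (polyseq p) i))%N.

(* p is "the" primitive polynomial of alpha (as in the paper): a nonzero
   integer polynomial having alpha as a root, of minimal degree, and among
   those of minimal degree, with leading coefficient minimal in absolute value.
   (It is unique up to sign.) *)
Definition is_primitive_poly (alpha : CC) (p : {poly int}) : Prop :=
  [/\ p != 0, root (map_poly (fun z : int => z%:~R : CC) p) alpha &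
      forall q : {poly int}, q != 0 ->
        root (map_poly (fun z : int => z%:~R : CC) q) alpha ->
        (size p <= size q)%N /\
        (size q = size p -> `|lead_coef p| <= `|lead_coef q|)].

(* A containment graph of A = {r, r+1, ..., r+N-1} in B.B: for each element
   a_i = r + i (i < N) a fixed representation rep i = (b1, b2) with b1, b2 in B
   and b1 * b2 = a_i.  Its edges are indexed by 'I_N: edge i joins rep i .1
   (first copy of B) to rep i .2 (second copy of B). *)
Definition containment_rep (r : CC) (N : nat) (B : seq CC)
    (rep : 'I_N -> CC * CC) : Prop :=
  forall i : 'I_N, [/\ (rep i).1 \in B, (rep i).2 \in B &
                      (rep i).1 * (rep i).2 = r + (i : nat)%:R].

(* The containment graph given by rep contains a cycle of length 2k (k > 0):
   distinct first-copy vertices x_0..x_{k-1}, distinct second-copy vertices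
   y_0..y_{k-1}, and 2k distinct edges e_j = {x_j, y_j}, f_j = {x_{j+1}, y_j}
   (indices mod k). *)
Definition has_cycle_2k (N : nat) (rep : 'I_N -> CC * CC) (k : nat) : Prop :=
  exists (x y : 'I_k -> CC) (e f : 'I_k -> 'I_N),
    [/\ injective x, injective y, injective e, injective f &
        forall j j' : 'I_k, e j != f j'] /\
    (forall j : 'I_k, rep (e j) = (x j, y j) /\ rep (f j) = (x (ordS j), y j)).

(* Main.v *)
Require Import Defs.
From HB Require Import structures.
From mathcomp Require Import all_boot all_order all_algebra all_solvable all_field.
From mathcomp Require Import complex.
From mathcomp Require Import Rstruct.
From mathcomp Require Import zify.
From Stdlib Require Rdefinitions.
From Stdlib Require Import Classical.
Import Order.TTheory GRing.Theory Num.Theory.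
Local Open Scope ring_scope.

Definition norm1 (g : {poly CC}) : CC := \sum_(i < size g) `|g`_i|.

Lemma norm1_ge0 (g : {poly CC}) : 0 <= norm1 g.
Proof. by apply: sumr_ge0 => i _; apply: normr_ge0. Qed.

Lemma norm1_widen n (g : {poly CC}) : (size g <= n)%N -> \sum_(i < n) `|g`_i| = norm1 g.
Proof.
move=> H; rewrite /norm1 (big_ord_widen n (fun i => `|g`_i|) H) [RHS]big_mkcond /=.
apply: eq_bigr => i _; case: ifP => // /negbT; rewrite -leqNgt => Hi.
by rewrite nth_default ?normr0.
Qed.
Arguments norm1_widen {n g}.

Lemma coef_le_norm1 (g : {poly CC}) i : `|g`_i| <= norm1 g.
Proof.
case: (ltnP i (size g)) => Hi.
  rewrite /norm1 (bigD1 (Ordinal Hi)) //= lerDl.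
  by apply: sumr_ge0 => j _; apply: normr_ge0.
by rewrite nth_default ?normr0 ?norm1_ge0.
Qed.

Lemma norm1_XsubCM (a : CC) (g : {poly CC}) : norm1 (('X - a%:P) * g) <= (1 + `|a|) * norm1 g.
Proof.
have Hs : (size (('X - a%:P) * g)%R <= (size g).+1)%N.
  apply: leq_trans (size_polyMleq _ _) _; rewrite size_XsubC /=.
  by case: (size g).
rewrite -(norm1_widen Hs) [X in _ <= X]mulrDl mul1r.
have H2 : (size g <= (size g).+1)%N by [].
rewrite -[in X in _ <= _ + X](norm1_widen H2) mulr_sumr.
rewrite [X in _ <= X + _]/norm1.
have -> : \sum_(i < size g) `|g`_i| = \sum_(i < (size g).+1) `|('X * g)`_i|.
  by rewrite big_ord_recl coefXM /= normr0 add0r; apply: eq_bigr => i _; rewrite coefXM.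
rewrite -big_split /=; apply: ler_sum => i _.
rewrite mulrBl coefB coefCM; apply: le_trans (ler_normB _ _) _.
by rewrite normrM.
Qed.

Lemma norm1_Z (c : CC) (g : {poly CC}) : norm1 (c *: g) <= `|c| * norm1 g.
Proof.
rewrite -(norm1_widen (size_scale_leq c g)) /norm1 mulr_sumr.
by apply: ler_sum => i _; rewrite coefZ normrM.
Qed.

Lemma norm1_B (f g : {poly CC}) : norm1 (f - g) <= norm1 f + norm1 g.
Proof.
set n := maxn (size f) (size g).
have Hf : (size f <= n)%N by rewrite leq_maxl.
have Hg : (size g <= n)%N by rewrite leq_maxr.
have Hfg : (size (f - g)%R <= n)%N.
  by apply: leq_trans (size_polyD _ _) _; rewrite size_polyN.
rewrite -(norm1_widen Hf) -(norm1_widen Hg) -(norm1_widen Hfg) -big_split.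
by apply: ler_sum => i _; rewrite coefB ler_normB.
Qed.

Lemma norm1_1 : norm1 (1 : {poly CC}) = 1.
Proof. by rewrite /norm1 size_poly1 big_ord1 coefC /= normr1. Qed.

Lemma norm1_prod (I : Type) (r : seq I) (F : I -> CC) :
  norm1 (\prod_(i <- r) ('X - (F i)%:P)) <= \prod_(i <- r) (1 + `|F i|).
Proof.
elim: r => [|i r IH]; first by rewrite !big_nil norm1_1.
rewrite !big_cons; apply: le_trans (norm1_XsubCM _ _) _.
by apply: ler_wpM2l => //; apply: addr_ge0.
Qed.

Lemma horner_le_norm1 (g : {poly CC}) (w : CC) : `|w| <= 1 -> `|g.[w]| <= norm1 g.
Proof.
move=> Hw; rewrite horner_coef; apply: le_trans (ler_norm_sum _ _ _) _.
apply: ler_sum => i _; rewrite normrM normrX.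
by apply: ler_piMr => //; apply: exprn_ile1.
Qed.

Lemma CC_prim_root_exists n : (n > 0)%N -> exists z : CC, n.-primitive_root z.
Proof.
pose p : {poly CC} := 'X^n - 1; have [r Dp] := closed_field_poly_normal p.
move=> n_gt0; rewrite (monicP _) ?monicXnsubC // scale1r in Dp.
have rn1: all n.-unity_root r by apply/allP=> z; rewrite -root_prod_XsubC -Dp.
have sz_r: (n < (size r).+1)%N.
  by rewrite -(size_prod_XsubC r id) -Dp size_XnsubC.
have [|z] := hasP (has_prim_root n_gt0 rn1 _ sz_r); last by exists z.
by rewrite -separable_prod_XsubC -Dp separable_Xn_sub_1 // pnatr_eq0 -lt0n.
Qed.

Lemma prim_norm1 n (w : CC) j : n.-primitive_root w -> `|w ^+ j| = 1.
Proof.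
move=> Hw; have n0 := prim_order_gt0 Hw.
rewrite normrX; suff -> : `|w| = 1 by rewrite expr1n.
apply/eqP; rewrite -(pexpr_eq1 n0) ?normr_ge0 // -normrX prim_expr_order //.
by rewrite normr1.
Qed.

Lemma sum_prim_horner n (w : CC) (h : {poly CC}) :
  n.-primitive_root w -> (size h <= n)%N ->
  \sum_(j < n) h.[w ^+ j] = n%:R * h`_0.
Proof.
move=> Hw Hs; have n0 := prim_order_gt0 Hw.
under eq_bigr => j _ do rewrite (horner_coef_wide _ Hs).
rewrite exchange_big /=.
case: n Hw Hs n0 => [//|n] Hw Hs _.
rewrite big_ord_recl /= [X in _ + X]big1 ?addr0.
  under eq_bigr => j _ do rewrite expr0 mulr1.
  by rewrite sumr_const card_ord mulr_natl.
move=> i _; rewrite -mulr_sumr.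
have -> : \sum_(j < n.+1) (w ^+ j) ^+ (bump 0 i) = \sum_(j < n.+1) (w ^+ (bump 0 i)) ^+ j.
  by apply: eq_bigr => j _; rewrite -!exprM mulnC.
set x := w ^+ bump 0 i.
have Hx : x != 1.
  rewrite /x -(expr0 w) (eq_prim_root_expr Hw) // mod0n modn_small //.
  by rewrite /bump /= add1n ltnS.
have : (x - 1) * \sum_(j < n.+1) x ^+ j = 0.
  by rewrite -subrX1 /x -exprM mulnC exprM (prim_expr_order Hw) expr1n subrr.
by move/eqP; rewrite mulf_eq0 subr_eq0 (negPf Hx) /= => /eqP ->; rewrite mulr0.
Qed.
Arguments sum_prim_horner {n w h}.
Arguments prim_norm1 {n w} j.

Definition mx (z : CC) : CC := if 1 < `|z| then `|z| else 1.
Definition fac (z : CC) : {poly CC} :=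
  if 1 < `|z| then 'X - z%:P else 1 - (z^* ) *: 'X.

Lemma size_fac z : (size (fac z) <= 2)%N.
Proof.
rewrite /fac; case: ifP => _; first by rewrite size_XsubC.
apply: leq_trans (size_polyD _ _) _; rewrite size_polyN size_poly1 geq_max /=.
by apply: leq_trans (size_scale_leq _ _) _; rewrite size_polyX.
Qed.

Lemma size_prod_fac s : (size (\prod_(z <- s) fac z)%R <= (size s).+1)%N.
Proof.
elim: s => [|z s IH]; first by rewrite big_nil size_poly1.
rewrite big_cons; apply: leq_trans (size_polyMleq _ _) _.
have := size_fac z; move: IH => /=; lia.
Qed.

Lemma fac_horner_norm z w : `|w| = 1 -> `|(fac z).[w]| = `|w - z|.
Proof.
move=> Hw; rewrite /fac; case: ifP => _; first by rewrite hornerXsubC.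
rewrite !hornerE.
have H1 : 1 = w^* * w.
  by rewrite mulrC -normCK Hw expr1n.
rewrite [X in `|X - _|]H1 -mulrBl -rmorphB normrM norm_conjC Hw mulr1.
by [].
Qed.

Lemma fac0 z : `|(fac z).[0]| = mx z.
Proof.
rewrite /fac /mx; case: ifP => _; first by rewrite hornerXsubC sub0r normrN.
by rewrite !hornerE subr0 normr1.
Qed.

Lemma mx_ge1 z : 1 <= mx z.
Proof. by rewrite /mx; case: ifP => // /ltW. Qed.

Lemma landau (c : CC) (s : seq CC) :
  `|c| * \prod_(z <- s) mx z <= norm1 (c *: \prod_(z <- s) ('X - z%:P)).
Proof.
set g := c *: _; set h := c *: \prod_(z <- s) fac z.
have [w Hw] := @CC_prim_root_exists (size s).+1 (ltn0Sn (size s) : (0 < (size s).+1)%N).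
have Hs : (size h <= (size s).+1)%N.
  by apply: leq_trans (size_scale_leq _ _) (size_prod_fac _).
have E := sum_prim_horner Hw Hs.
have H0 : `|h`_0| = `|c| * \prod_(z <- s) mx z.
  rewrite -horner_coef0 hornerZ horner_prod normrM normr_prod.
  by congr (_ * _); apply: eq_bigr => z _; rewrite fac0.
have Hj : forall j : nat, `|h.[w ^+ j]| = `|g.[w ^+ j]|.
  move=> j; rewrite /g /h !hornerZ !horner_prod !normrM !normr_prod.
  congr (_ * _); apply: eq_bigr => z _.
  by rewrite fac_horner_norm ?(prim_norm1 _ Hw) // hornerXsubC.
have Hn : (0 : CC) < (size s).+1%:R by rewrite ltr0n.
rewrite -(ler_pM2l Hn) -H0 -normr_nat -normrM -E.
apply: le_trans (ler_norm_sum _ _ _) _.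
rewrite normr_nat; apply: (@le_trans _ _ (\sum_(j < (size s).+1) norm1 g)); last by rewrite sumr_const card_ord mulr_natl.
apply: ler_sum => j _; rewrite Hj; apply: horner_le_norm1.
by rewrite (prim_norm1 _ Hw).
Qed.

Notation toC := (map_poly (fun z : int => z%:~R : CC)).

Lemma prod_bound (s : seq CC) :
  \prod_(z <- s) (1 + `|z|) <= 2 ^+ size s * \prod_(z <- s) mx z.
Proof.
elim: s => [|z s IH]; first by rewrite !big_nil expr0 mulr1.
rewrite !big_cons /= exprS mulrACA; apply: ler_pM => //.
- by apply: addr_ge0.
- by apply: prodr_ge0 => i _; apply: addr_ge0.
- rewrite /mx; case: ifP => H.
    by rewrite mulr2n mulrDl mul1r lerD2r ltW.
  by rewrite mulr1 -[2]/(1 + 1) lerD2l real_leNgt ?H // ?normr_real ?real1.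
Qed.

Lemma coef_split (c : CC) (s : seq CC) i :
  `|(c *: \prod_(z <- s) ('X - z%:P))`_i| <= `|c| * (2 ^+ size s * \prod_(z <- s) mx z).
Proof.
apply: le_trans (coef_le_norm1 _ _) _; apply: le_trans (norm1_Z _ _) _.
apply: ler_wpM2l => //. have H := @norm1_prod _ s (fun z => z). have H2 := prod_bound s. exact: (le_trans H H2).

Qed.

Lemma prod_mx_ge1 (t : seq CC) : 1 <= \prod_(z <- t) mx z.
Proof.
elim: t => [|z t IH]; first by rewrite big_nil.
rewrite big_cons; exact: (mulr_ege1 (mx_ge1 z) IH).
Qed.

Lemma exists_min (Q : nat -> Prop) :
  (exists n, Q n) -> exists n, Q n /\ forall m, Q m -> (n <= m)%N.
Proof.
move=> [n Hn]; apply: NNPP => Hno.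
suff H : forall n m, (m <= n)%N -> ~ Q m by exact: (H n n (leqnn n) Hn).
elim=> [|n' IH] m Hm HQ; apply: Hno; exists m; split => // m' HQ'.
  by move: Hm; rewrite leqn0 => /eqP ->.
rewrite leqNgt; apply/negP => Hlt; apply: (IH m') => //; lia.
Qed.

Definition Pe {k : nat} (a : 'I_k -> nat) : {poly int} :=
  \prod_(j < k) ('X - (- (a j)%:Z)%:P).

Lemma toC_Pe {k : nat} (a : 'I_k -> nat) : toC (Pe a) = \prod_(j < k) ('X - (- (a j)%:R)%:P).
Proof.
rewrite /Pe rmorph_prod /=; apply: eq_bigr => j _.
by rewrite map_polyXsubC /= rmorphN.
Qed.

Lemma horner_Pe {k : nat} (a : 'I_k -> nat) (r : CC) : (toC (Pe a)).[r] = \prod_(j < k) (r + (a j)%:R).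
Proof.
rewrite toC_Pe horner_prod; apply: eq_bigr => j _.
by rewrite hornerXsubC opprK.
Qed.

Lemma size_Pe {k : nat} (a : 'I_k -> nat) : size (Pe a) = k.+1.
Proof. by rewrite /Pe size_prod_XsubC [index_enum _]unlock -enumT size_enum_ord. Qed.

Lemma norm1_Pe {k : nat} (a : 'I_k -> nat) N : (forall j, a j < N)%N -> norm1 (toC (Pe a)) <= N%:R ^+ k.
Proof.
move=> Ha; rewrite toC_Pe; have H := @norm1_prod _ (index_enum 'I_k) (fun j => - (a j)%:R : CC); apply: le_trans H _.
rewrite -[k in X in _ <= X](card_ord k) -prodr_const.
apply: ler_prod => j _; rewrite addr_ge0 //= normrN normr_nat nat1r ler_nat.
exact: Ha.
Qed.

Theorem lemma3 :
  forall k : nat, (0 < k)%N ->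
  exists Ck : Rdefinitions.R, 0 < Ck /\
    forall (r : CC) (N : nat) (B : seq CC) (rep : 'I_N -> CC * CC),
      (0 < N)%N ->
      containment_rep r B rep ->
      has_cycle_2k rep k ->
      (exists p : {poly int}, is_primitive_poly r p) /\
      (forall p : {poly int}, is_primitive_poly r p ->
         ((size p).-1 <= k)%N /\
         (poly_height p)%:R <= Ck * (N%:R) ^+ k).
Proof.
move=> k k0; exists (2 ^ k.+1)%:R; split; first by rewrite ltr0n expn_gt0.
move=> r N B rep N0 crep [x [y [e [f [[xi yi ei fi ef] hrep]]]]].
pose ea := fun j => (e j : nat); pose fa := fun j => (f j : nat).
pose P := Pe ea - Pe fa.
have Hroot : root (toC P) r.
  rewrite /root rmorphB hornerD hornerN !horner_Pe subr_eq0.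
  have He : forall j, r + (ea j)%:R = x j * y j.
    move=> j; have [_ _ <-] := crep (e j); by rewrite (proj1 (hrep j)).
  have Hf : forall j, r + (fa j)%:R = x (ordS j) * y j.
    move=> j; have [_ _ <-] := crep (f j); by rewrite (proj2 (hrep j)).
  under eq_bigr => j _ do rewrite He.
  under [X in _ == X]eq_bigr => j _ do rewrite Hf.
  by rewrite !big_split /= [X in X * _ == _](reindex_inj (@ordS_inj k)) /= eqxx.
have j0 : 'I_k := Ordinal k0.
have HP0 : P != 0.
  apply/negP => /eqP HP.
  have : (toC P).[- (ea j0)%:R] = 0 by rewrite HP rmorph0 horner0.
  rewrite rmorphB hornerD hornerN !horner_Pe.
  rewrite (bigD1 j0) //= addNr mul0r sub0r => /eqP; rewrite oppr_eq0.
  apply/negP; rewrite prodf_seq_neq0; apply/allP => j _ /=.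
  rewrite addrC subr_eq0 eqr_nat; apply/negP => /eqP Hj.
  by have := ef j0 j; rewrite -val_eqE /= -/(ea j0) -/(fa j) Hj eqxx.
have HsP : (size P <= k.+1)%N.
  by apply: leq_trans (size_polyD _ _) _; rewrite size_polyN !size_Pe maxnn.
have Hn1 : norm1 (toC P) <= 2 * N%:R ^+ k.
  rewrite rmorphB; apply: le_trans (norm1_B _ _) _.
  rewrite mulr2n mulrDl mul1r; apply: lerD; apply: norm1_Pe => j; exact: ltn_ord.
clearbody P.
split.
  have [m [[q0 [q0nz [q0r q0s]]] Hm]] := exists_min
    (fun m => exists q : {poly int}, q != 0 /\ root (toC q) r /\ size q = m)
    (ex_intro _ (size P) (ex_intro _ P (conj HP0 (conj Hroot erefl)))).
  have [l [[p [pnz [pr [ps pl]]]] Hl]] := exists_min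
    (fun l => exists q : {poly int}, q != 0 /\ root (toC q) r /\ size q = m /\
       absz (lead_coef q) = l)
    (ex_intro _ _ (ex_intro _ q0 (conj q0nz (conj q0r (conj q0s erefl))))).
  exists p; split => // q qnz qr; split.
    by rewrite ps; apply: Hm; exists q.
  move=> Hsq; rewrite -!abszE lez_nat pl; apply: Hl; exists q.
  by split => //; split => //; split => //; rewrite Hsq ps.
move=> p [pnz proot pmin].
have [Hsz _] := pmin P HP0 Hroot.
have HsPk : (size p <= k.+1)%N := leq_trans Hsz HsP.
set p' := zprimitive p; set cp := zcontents p.
have Ep : p = cp *: p' := zpolyEprim p.
have cp0 : cp != 0 by rewrite zcontents_eq0.
have p'0 : p' != 0 by rewrite zprimitive_eq0.
have toCZ : forall (c : int) (q : {poly int}), toC (c *: q) = (c%:~R : CC) *: toC q.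
  by move=> c q; rewrite map_polyZ.
have p'r : root (toC p') r.
  by move: proot; rewrite {1}Ep toCZ rootZ // intr_eq0.
have [_ Hlead] := pmin p' p'0 p'r.
have Hcp : `|cp| = 1.
  have := Hlead (size_zprimitive p); rewrite {1}Ep lead_coefZ normrM.
  have lp0 : 0 < `|lead_coef p'| by rewrite normr_gt0 lead_coef_eq0.
  rewrite ger_pMl // => H; move: cp0 H; lia.
have Hmod : P %% p = 0.
  apply/eqP; apply: contraT => Hne.
  have Hr : root (toC (P %% p)) r.
    have E := Pdiv.Idomain.divp_eq P p.
    have : (toC (lead_coef p ^+ scalp P p *: P)).[r] = (toC (P %/ p * p + P %% p)).[r].
      by rewrite E.
    rewrite toCZ rmorphD rmorphM hornerZ hornerD hornerM (rootP Hroot) (rootP proot).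
    by rewrite mulr0 mulr0 add0r => /esym/eqP.
  have [Hs2 _] := pmin _ Hne Hr.
  have := ltn_modpN0 P pnz; move=> H; have := leq_trans H Hs2; by rewrite ltnn.
have Hdvd : p %| P by rewrite /dvdp Hmod.
have [q Hq] := dvdpP_int Hdvd.
have q0 : q != 0 by apply: contraNneq HP0 => q0; rewrite Hq q0 mulr0.
have [s Hs] := closed_field_poly_normal (toC p').
have [t Ht] := closed_field_poly_normal (toC q).
set a := lead_coef (toC p') in Hs; set b := lead_coef (toC q) in Ht.
have EPC : toC P = (a * b) *: \prod_(z <- s ++ t) ('X - z%:P).
  have toCM : forall u v : {poly int}, toC (u * v) = toC u * toC v by move=> u v; rewrite rmorphM.
  by rewrite Hq -/p' toCM Hs Ht big_cat /= -scalerAl -scalerAr scalerA.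
have Hb : 1 <= `|b|.
  rewrite /b lead_coef_map_inj //; last exact: intr_inj.
  rewrite -intr_norm ler1z; move: q0; rewrite -lead_coef_eq0; lia.
have mx0 : forall z, 0 <= mx z by move=> z; apply: le_trans (mx_ge1 z).
have Ha : `|a| * \prod_(z <- s) mx z <= 2 * N%:R ^+ k.
  apply: le_trans Hn1; rewrite EPC; apply: le_trans (landau _ _).
  rewrite big_cat normrM mulrACA; apply: ler_peMr.
    by apply: mulr_ge0 => //; apply: prodr_ge0 => z _.
  have := mulr_ege1 Hb (prod_mx_ge1 t); by [].
have Hsz' : size (toC p') = size p.
  by rewrite size_map_inj_poly ?size_zprimitive //; exact: intr_inj.
have a0 : a != 0.
  by rewrite /a lead_coef_eq0 -size_poly_eq0 Hsz' size_poly_eq0.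
have Hss : (size s <= k)%N.
  have : size (toC p') = (size s).+1 by rewrite {1}Hs size_scale // size_prod_XsubC.
  rewrite Hsz' => H; move: HsPk; rewrite H; lia.
have Hcoef : forall i : nat, (absz (p`_i)%R <= 2 ^ k.+1 * N ^ k)%N.
  move=> i; rewrite -(ler_nat CC).
  have -> : ((absz p`_i)%:R : CC) = `|(toC p')`_i|.
    by rewrite coef_map /= -intr_norm {1}Ep coefZ natr_absz normrM Hcp mul1r.
  rewrite Hs; apply: le_trans (coef_split _ _ _) _.
  rewrite mulrCA expnS -mulnA natrM natrM (natrX CC 2 k) (natrX CC N k) [X in _ <= X]mulrCA.
  apply: ler_pM => //.
  - exact: exprn_ge0.
  - by apply: mulr_ge0 => //; apply: prodr_ge0 => z _.
  - by apply: ler_weXn2l => //; rewrite ler1n.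
split; first by rewrite -subn1 leq_subLR add1n.
rewrite -(natrX Rdefinitions.R N k) -(natrM Rdefinitions.R) ler_nat.
apply/bigmax_leqP => i _; exact: Hcoef.
Qed.
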